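(* Let $N\ge1$ be an integer and $x\in\mathbb{S}$. Then $\epsilon(N)-\epsilon(N+1)>0$, $\epsilon(N)-2\epsilon(N+1)+\epsilon(N+2)>0$, $\epsilon(N,x)-\epsilon(N+1,x)>0$ and $\epsilon(N,x)-2\epsilon(N+1,x)+\epsilon(N+2,x)>0$.
   Context: Let $\pi,q$ be probability densities with respect to a $\sigma$-finite measure $\mu$ on $\mathbb{X}$ with $q>0$ wherever $\pi>0$; $\pi(dx)=\pi(x)\mu(dx)$, $q(dx)=q(x)\mu(dx)$, $\mathbb{S}=\{\pi>0\}$, $w=\pi/q$ on $\mathbb{S}$ and $0$ elsewhere. For integer $N\ge1$ and $z_1\in\mathbb{S}$, $\epsilon(N,z_1)=\int_{\mathbb{X}^{N-1}}\frac{w(z_1)}{\sum_{i=1}^Nw(z_i)}\prod_{n=2}^Nq(dz_n)$ (so $\epsilon(1,z_1)=1$) and $\epsilon(N)=\int_{\mathbb{S}}\epsilon(N,z)\pi(dz)$. *)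

(* Defs.v *)
From HB Require Import structures.
From mathcomp Require Import all_boot all_order all_algebra.
From mathcomp Require Import all_classical all_reals all_analysis.
Set Implicit Arguments. Unset Strict Implicit. Unset Printing Implicit Defensive.
Import Order.TTheory GRing.Theory Num.Theory.
Local Open Scope classical_set_scope.
Local Open Scope ring_scope.

Section Defs.
Context (d : measure_display) (X : measurableType d) (R : realType)
  (mu : {measure set X -> \bar R}) (pi q : X -> R).

Definition supp : set X := [set x | 0 < pi x].

Definition weight (x : X) : R := if (0 < pi x)%R then pi x / q x else 0.

(* iter_q k g s = int_{X^k} g (s + w z_1 + ... + w z_k) prod q(dz_i),
   written as an iterated integral (Tonelli, nonnegative integrand) *)
Fixpoint iter_q (k : nat) (g : R -> \bar R) (s : R) : \bar R :=
  match k with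
  | 0 => g s
  | k'.+1 => (\int[mu]_z ((q z)%:E * iter_q k' g (s + weight z)))%E
  end.

(* eps(N, z1) = int_{X^{N-1}} w(z1) / (sum_{i=1}^N w(z_i)) prod_{n=2}^N q(dz_n) *)
Definition eps_pt (N : nat) (z1 : X) : \bar R :=
  iter_q N.-1 (fun s => (weight z1 / s)%:E) (weight z1).

Definition eps (N : nat) : \bar R :=
  (\int[mu]_(z in supp) ((pi z)%:E * eps_pt N z))%E.

End Defs.

(* Main.v *)
Require Import Defs.
From HB Require Import structures.
From mathcomp Require Import all_boot all_order all_algebra.
From mathcomp Require Import all_classical all_reals all_analysis.
Import Order.TTheory GRing.Theory Num.Theory.
Local Open Scope classical_set_scope.
Local Open Scope ring_scope.
From mathcomp Require Import measurable_realfun.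
From mathcomp Require Import ring lra.

Lemma convx (R : realType) (t u e : R) : 0 < t -> t <= u -> 0 < e ->
  u^-1 + (t + e)^-1 <= (u + e)^-1 + t^-1.
Proof.
move=> t0 tu e0.
have u0 : 0 < u by apply: lt_le_trans t0 tu.
have E1 : u^-1 - (u + e)^-1 = e / (u * (u + e)) by field; rewrite ?gt_eqF ?addr_gt0 ?mulr_gt0 ?addr_gt0.
have E2 : t^-1 - (t + e)^-1 = e / (t * (t + e)) by field; rewrite ?gt_eqF ?addr_gt0 ?mulr_gt0 ?addr_gt0.
have H : e / (u * (u + e)) <= e / (t * (t + e)).
  rewrite ler_pM2l // lef_pV2 ?posrE ?mulr_gt0 ?addr_gt0 //.
  nra.
move: E1 E2 H; generalize (e / (u * (u + e))) (e / (t * (t + e))) => A B; lra.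
Qed.

Arguments convx {R t u e}.

Lemma convx' (R : realType) (t u e : R) : 0 < t -> t < u -> 0 < e ->
  u^-1 + (t + e)^-1 < (u + e)^-1 + t^-1.
Proof.
move=> t0 tu e0.
have u0 : 0 < u by apply: lt_trans t0 tu.
have E1 : u^-1 - (u + e)^-1 = e / (u * (u + e)) by field; rewrite ?gt_eqF ?addr_gt0 ?mulr_gt0 ?addr_gt0.
have E2 : t^-1 - (t + e)^-1 = e / (t * (t + e)) by field; rewrite ?gt_eqF ?addr_gt0 ?mulr_gt0 ?addr_gt0.
have H : e / (u * (u + e)) < e / (t * (t + e)).
  rewrite ltr_pM2l // ltf_pV2 ?posrE ?mulr_gt0 ?addr_gt0 //.
  nra.
move: E1 E2 H; generalize (e / (u * (u + e))) (e / (t * (t + e))) => A B; lra.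
Qed.

Arguments convx' {R t u e}.

Lemma fin_ineq (R : realType) (a b c e : \bar R) : a \is a fin_num -> b \is a fin_num ->
  c \is a fin_num -> e \is a fin_num -> (a + b < c + e)%E -> (b - c < e - a)%E.
Proof.
move: a b c e => [a| |] // [b| |] // [c| |] // [e| |] // _ _ _ _.
rewrite -?EFinD -?EFinB !lte_fin; lra.
Qed.

Lemma final (R : realType) (A B C H1 PH H2 : \bar R) : A \is a fin_num ->
  (0 <= C)%E -> (0 <= PH)%E -> (0 <= H2)%E -> A = (B + H1)%E -> B = (C + PH)%E -> H1 = (PH + H2)%E ->
  (0 < H1)%E -> (0 < H2)%E -> (0 < A - B)%E /\ (0 < A - 2%:E * B + C)%E.
Proof.
move=> finA c0 p0 h0 eA eB eH pH1 pH2; subst A B H1.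
move: C PH H2 c0 p0 h0 finA pH1 pH2 => [c| |] [p| |] [h| |] //=.
rewrite !lee_fin !lte_fin => c0 p0 h0 _ pH1 pH2; split; lra.
Qed.
Section Aux.
Context d (X : measurableType d) (R : realType) (mu : {measure set X -> \bar R}) (pi q : X -> R).
Hypothesis mu_sf : sigma_finite setT mu.
Hypothesis pi_meas : measurable_fun setT pi.
Hypothesis q_meas : measurable_fun setT q.
Hypothesis pi_ge0 : forall x, 0 <= pi x.
Hypothesis q_ge0 : forall x, 0 <= q x.
Hypothesis pi_int1 : (\int[mu]_x (pi x)%:E = 1)%E.
Hypothesis q_int1 : (\int[mu]_x (q x)%:E = 1)%E.
Hypothesis q_pos : forall x, 0 < pi x -> 0 < q x.

Local Notation w := (weight pi q).
Local Open Scope ereal_scope.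

Definition P (h : R -> \bar R) (s : R) : \bar R := \int[mu]_z ((q z)%:E * h (s + w z)%R).
Local Notation It k h := (iter_q mu pi q k h).

Lemma w_ge0 z : (0 <= w z)%R.
Proof. by rewrite /weight; case: ifPn => // h; rewrite divr_ge0 // ltW. Qed.

Lemma w_gt0 z : (0 < pi z)%R -> (0 < w z)%R.
Proof. by move=> h; rewrite /weight h divr_gt0 // q_pos. Qed.

Lemma w_meas : measurable_fun setT w.
Proof.
rewrite (_ : w = fun z => if (0 < pi z)%R then (pi z * (q z `^ (-1)))%R else 0%R).
  apply: measurable_fun_ifT.
  - exact: measurable_realfun.measurable_fun_ltr.
  - apply: measurable_realfun.measurable_funM => //; exact: measurableT_comp (measurable_powR _) q_meas.
  - exact: measurable_cst.
apply/funext => z; rewrite /weight; case: ifPn => // h.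
by rewrite powRN powRr1 // ltW // q_pos.
Qed.

Lemma It_S k h s : It k.+1 h s = It k (P h) s.
Proof.
elim: k s => [//|k IH] s.
by apply: eq_integral => z _; congr (_ * _); exact: IH.
Qed.

Lemma It_Sf k h : It k.+1 h = P (It k h).
Proof. by []. Qed.

Let H2 := isSFinite.Build _ _ _ (Measure.sort mu) (sfinite_measure_sigma_finite mu_sf).
Let H3 := isSigmaFinite.Build _ _ _ (Measure.sort mu) mu_sf.
Let mu' := HB.pack_for (SigmaFiniteMeasure.type X R) (Measure.sort mu) H2 H3.

Lemma P_meas h : measurable_fun setT h -> (forall t, 0 <= h t) ->
  measurable_fun setT (P h).
Proof.
move=> mh h0.
pose f := fun p : R * X => (q p.2)%:E * h (p.1 + w p.2)%R.
have mf : measurable_fun setT f.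
  apply: emeasurable_funM.
  - apply/measurable_EFinP; exact: measurableT_comp q_meas measurable_snd.
  - apply: measurableT_comp => //; apply: measurable_realfun.measurable_funD.
    + exact: measurable_fst.
    + exact: measurableT_comp w_meas measurable_snd.
have f0 p : 0 <= f p by rewrite mule_ge0 // lee_fin.
have := @measurable_fun_fubini_tonelli_F _ _ R X R mu' f mf f0.
by [].
Qed.

Lemma P_ge0 h s : (forall t, 0 <= h t) -> 0 <= P h s.
Proof. by move=> h0; apply: integral_ge0 => z _; rewrite mule_ge0 // lee_fin. Qed.

Lemma P_mf h s : measurable_fun setT h ->
  measurable_fun setT (fun z => (q z)%:E * h (s + w z)%R).
Proof.
move=> mh; apply: emeasurable_funM.
- exact/measurable_EFinP.
- apply: measurableT_comp => //.
  exact: (measurable_realfun.measurable_funD (measurable_cst s) w_meas).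
Qed.

Lemma SP (D : set X) (f : X -> \bar R) : measurable D -> measurable_fun D f ->
  (forall z, D z -> 0 <= f z) ->
  (forall z, (0 < pi z)%R -> D z /\ 0 < f z) -> 0 < \int[mu]_(z in D) f z.
Proof.
move=> mD mf f0 fpos.
rewrite lt_def integral_ge0 // andbT; apply/eqP => H0.
have : \int[mu]_(z in D) `|f z| = 0.
  by rewrite -H0; apply: eq_integral => z /[!inE] Dz; rewrite gee0_abs // f0.
move/(ae_eq_integral_abs mu mD mf) => [N [mN N0 subN]].
have : \int[mu]_x (pi x)%:E = \int[mu]_x (cst 0 x).
  apply: ge0_ae_eq_integral => //.
  - exact/measurable_EFinP.
  - by move=> z _; rewrite lee_fin.
  - exists N; split => // z /= /not_implyP [_ ne0]; apply: subN => /=.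
    have pz : (0 < pi z)%R.
      by rewrite lt_def pi_ge0 andbT; apply/eqP => pz; apply: ne0; rewrite pz.
    have [Dz fz] := fpos z pz.
    by apply/not_implyP; split => // /eqP; rewrite gt_eqF.
by rewrite pi_int1 integral0 => /eqP; rewrite onee_eq0.
Qed.
Definition good (h : R -> \bar R) := measurable_fun setT h /\ forall t, 0 <= h t.

Lemma P_good h : good h -> good (P h).
Proof. by move=> [mh h0]; split; [exact: P_meas|move=> t; exact: P_ge0]. Qed.

Lemma It_good k h : good h -> good (It k h).
Proof. by move=> gh; elim: k => // k IH; rewrite It_Sf; exact: P_good. Qed.

Lemma good_add h1 h2 : good h1 -> good h2 -> good (fun t => h1 t + h2 t).
Proof.
move=> [m1 p1] [m2 p2]; split; last by move=> t; rewrite adde_ge0.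
exact: emeasurable_funD.
Qed.

Lemma P_add h1 h2 s : good h1 -> good h2 ->
  P (fun t => h1 t + h2 t) s = P h1 s + P h2 s.
Proof.
move=> [m1 p1] [m2 p2]; rewrite /P -ge0_integralD //.
- by apply: eq_integral => z _; rewrite ge0_muleDr.
- by move=> z _; rewrite mule_ge0 // lee_fin.
- exact: P_mf.
- by move=> z _; rewrite mule_ge0 // lee_fin.
- exact: P_mf.
Qed.

Lemma P_scale c h s : (0 <= c)%R -> good h ->
  P (fun t => c%:E * h t) s = c%:E * P h s.
Proof.
move=> c0 [mh h0]; rewrite /P -ge0_integralZl //.
- by apply: eq_integral => z _; rewrite muleCA.
- exact: P_mf.
- by move=> z _; rewrite mule_ge0 // lee_fin.
Qed.

Lemma P_local h1 h2 s : (forall t, (s <= t)%R -> h1 t = h2 t) -> P h1 s = P h2 s.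
Proof.
by move=> H; apply: eq_integral => z _; rewrite H // lerDl w_ge0.
Qed.

Lemma P_le h c s : good h -> (forall t, (s <= t)%R -> h t <= c%:E) -> (0 <= c)%R ->
  P h s <= c%:E.
Proof.
move=> [mh h0] hc c0.
apply: (@le_trans _ _ (\int[mu]_z ((q z)%:E * c%:E))).
  apply: ge0_le_integral => //.
  - by move=> z _; rewrite mule_ge0 // lee_fin.
  - exact: P_mf.
  - apply: emeasurable_funM; [exact/measurable_EFinP|exact: measurable_cst].
  - by move=> z _; rewrite lee_wpmul2l ?lee_fin // hc // lerDl w_ge0.
rewrite ge0_integralZr //.
- by rewrite q_int1 mul1e.
- exact/measurable_EFinP.
- by move=> z _; rewrite lee_fin.
Qed.

Lemma P_gt0 h s : good h -> (forall t, (0 < t)%R -> 0 < h t) -> (0 < s)%R -> 0 < P h s.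
Proof.
move=> [mh h0] hp s0; apply: SP => //.
- exact: P_mf.
- by move=> z _; rewrite mule_ge0 // lee_fin.
- move=> z pz; split => //; rewrite mule_gt0 // ?lte_fin ?q_pos //.
  by apply: hp; rewrite ltr_wpDr // w_ge0.
Qed.

Lemma It_local k h1 h2 s : (forall t, (s <= t)%R -> h1 t = h2 t) -> It k h1 s = It k h2 s.
Proof.
elim: k s => [|k IH] s H; first exact: H.
rewrite !It_Sf; apply: P_local => t st; apply: IH => t' tt'.
by apply: H; exact: le_trans tt'.
Qed.

Lemma It_add k h1 h2 s : good h1 -> good h2 ->
  It k (fun t => h1 t + h2 t) s = It k h1 s + It k h2 s.
Proof.
move=> g1 g2; elim: k s => [//|k IH] s.
rewrite !It_Sf -P_add; try exact: It_good.
by apply: P_local => t _; exact: IH.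
Qed.

Lemma It_scale k c h s : (0 <= c)%R -> good h ->
  It k (fun t => c%:E * h t) s = c%:E * It k h s.
Proof.
move=> c0 gh; elim: k s => [//|k IH] s.
rewrite !It_Sf -P_scale //; last exact: It_good.
by apply: P_local => t _; exact: IH.
Qed.

Lemma It_le k h c s : good h -> (forall t, (s <= t)%R -> h t <= c%:E) -> (0 <= c)%R ->
  It k h s <= c%:E.
Proof.
move=> gh hc c0; elim: k s hc => [|k IH] s hc; first exact: hc.
rewrite It_Sf; apply: P_le => //; first exact: It_good.
move=> t st; apply: IH => t' tt'; apply: hc; exact: le_trans tt'.
Qed.

Lemma It_gt0 k h s : good h -> (forall t, (0 < t)%R -> 0 < h t) -> (0 < s)%R ->
  0 < It k h s.
Proof.
move=> gh hp; elim: k s => [|k IH] s s0; first exact: hp.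
rewrite It_Sf; apply: P_gt0 => //; exact: It_good.
Qed.
Lemma P_cst c s : 0 <= c -> P (fun _ => c) s = c.
Proof.
move=> c0; rewrite /P ge0_integralZr //.
- by rewrite q_int1 mul1e.
- exact/measurable_EFinP.
- by move=> z _; rewrite lee_fin.
Qed.

Lemma SM (f1 f2 : X -> \bar R) : measurable_fun setT f1 -> measurable_fun setT f2 ->
  (forall z, 0 <= f2 z) -> (forall z, f2 z <= f1 z) -> (forall z, f1 z \is a fin_num) ->
  (forall z, (0 < pi z)%R -> f2 z < f1 z) -> \int[mu]_z f1 z \is a fin_num ->
  \int[mu]_z f2 z < \int[mu]_z f1 z.
Proof.
move=> m1 m2 p2 le21 fin1 lt21 fin.
have fin2 z : f2 z \is a fin_num.
  have := fin1 z; rewrite !fin_numElt => /andP[_ h].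
  by rewrite (lt_le_trans _ (p2 z)) ?ltNy0 //= (le_lt_trans (le21 z) h).
have E : \int[mu]_z f1 z = \int[mu]_z f2 z + \int[mu]_z (f1 z - f2 z).
  rewrite -ge0_integralD //.
  - by apply: eq_integral => z _; rewrite addeC subeK.
  - by move=> z _; rewrite sube_ge0 ?fin2 ?le21.
  - exact: emeasurable_funB.
have pos : 0 < \int[mu]_z (f1 z - f2 z).
  apply: SP => //.
  - exact: emeasurable_funB.
  - by move=> z _; rewrite sube_ge0 ?fin2 ?le21.
  - by move=> z pz; split => //; rewrite sube_gt0 lt21.
have fin2i : \int[mu]_z f2 z \is a fin_num.
  rewrite ge0_fin_numE; last by apply: integral_ge0 => z _; exact: p2.
  have le : \int[mu]_z f2 z <= \int[mu]_z f1 z.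
    by apply: ge0_le_integral.
  by apply: (le_lt_trans le); move: fin; rewrite fin_numElt => /andP[].
by rewrite E lteDl.
Qed.

Lemma P_lt h1 h2 s : good h1 -> good h2 ->
  (forall t, (s <= t)%R -> h2 t <= h1 t) ->
  (forall u, (0 < u)%R -> h2 (s + u)%R < h1 (s + u)%R) ->
  (forall t, (s <= t)%R -> h1 t \is a fin_num) -> P h1 s \is a fin_num ->
  P h2 s < P h1 s.
Proof.
move=> [m1 p1] [m2 p2] le21 lt21 fin1 fin; apply: SM => //.
- exact: P_mf.
- exact: P_mf.
- by move=> z; rewrite mule_ge0 // lee_fin.
- by move=> z; rewrite lee_wpmul2l ?lee_fin // le21 // lerDl w_ge0.
- by move=> z; rewrite fin_numM // fin1 // lerDl w_ge0.
- move=> z pz; rewrite lte_pmul2l ?lte_fin ?q_pos //.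
  by apply: lt21; apply: w_gt0.
Qed.
Definition g1 (t : R) : \bar R := if (0 < t)%R then (t^-1)%:E else 0.

Lemma g1_ge0 t : 0 <= g1 t.
Proof. by rewrite /g1; case: ifPn => // t0; rewrite lee_fin invr_ge0 ltW. Qed.

Lemma g1_fin t : g1 t \is a fin_num.
Proof. by rewrite /g1; case: ifPn. Qed.

Lemma g1_good : good g1.
Proof.
split; last exact: g1_ge0.
rewrite (_ : g1 = fun t => if (0 < t)%R then (t `^ (-1))%:E else 0).
  apply: measurable_fun_ifT.
  - by apply: measurable_realfun.measurable_fun_ltr => //; exact: measurable_cst.
  - apply/measurable_EFinP; exact: measurable_powR.
  - exact: measurable_cst.
apply/funext => t; rewrite /g1; case: ifPn => // t0.
by rewrite powRN powRr1 // ltW.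
Qed.

Lemma g1E t : (0 < t)%R -> g1 t = (t^-1)%:E.
Proof. by move=> t0; rewrite /g1 t0. Qed.

Lemma g1_le s t : (0 < s)%R -> (s <= t)%R -> g1 t <= g1 s.
Proof.
move=> s0 st; have t0 : (0 < t)%R by apply: lt_le_trans s0 st.
by rewrite !g1E // lee_fin lef_pV2.
Qed.

Lemma g1_lt s t : (0 < s)%R -> (s < t)%R -> g1 t < g1 s.
Proof.
move=> s0 st; have t0 : (0 < t)%R by apply: lt_trans s0 st.
by rewrite !g1E // lte_fin ltf_pV2.
Qed.

Lemma cst_good c : 0 <= c -> good (fun _ => c).
Proof. by move=> c0; split => //; exact: measurable_cst. Qed.

Lemma Pg1_bnd s : (0 < s)%R -> P g1 s <= (s^-1)%:E.
Proof.
move=> s0; apply: P_le; first exact: g1_good.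
- by move=> t st; rewrite -g1E //; exact: g1_le.
- by rewrite invr_ge0 ltW.
Qed.

Lemma fin_of_bnd (x : \bar R) (c : R) : 0 <= x -> x <= c%:E -> x \is a fin_num.
Proof. by move=> x0 xc; rewrite ge0_fin_numE // (le_lt_trans xc) // ltry. Qed.

Lemma Pg1_fin s : (0 < s)%R -> P g1 s \is a fin_num.
Proof.
move=> s0; apply: (@fin_of_bnd _ s^-1); last exact: Pg1_bnd.
by apply: P_ge0; exact: g1_ge0.
Qed.

Lemma Pg1_lt s : (0 < s)%R -> P g1 s < g1 s.
Proof.
move=> s0; suff : P g1 s < P (fun _ => g1 s) s by rewrite P_cst // g1_ge0.
apply: P_lt.
- exact/cst_good/g1_ge0.
- exact: g1_good.
- by move=> t st; exact: g1_le.
- by move=> u u0; apply: g1_lt => //; rewrite ltrDl.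
- by move=> t _; exact: g1_fin.
- by rewrite P_cst ?g1_ge0 // g1_fin.
Qed.

Definition h1 (t : R) : \bar R := if (0 < t)%R then g1 t - P g1 t else 0.

Lemma h1_good : good h1.
Proof.
split.
  apply: measurable_fun_ifT.
  - by apply: measurable_realfun.measurable_fun_ltr => //; exact: measurable_cst.
  - apply: emeasurable_funB; first exact: g1_good.1.
    by apply: P_meas; [exact: g1_good.1|exact: g1_good.2].
  - exact: measurable_cst.
move=> t; rewrite /h1; case: ifPn => // t0.
rewrite sube_ge0 ?g1_fin ?orbT //. exact: (ltW (Pg1_lt _ t0)).
Qed.

Lemma h1_pos t : (0 < t)%R -> 0 < h1 t.
Proof. by move=> t0; rewrite /h1 t0 sube_gt0 Pg1_lt. Qed.

Lemma g1_dec t : (0 < t)%R -> g1 t = P g1 t + h1 t.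
Proof. by move=> t0; rewrite /h1 t0 addeC subeK // Pg1_fin. Qed.

Lemma h1_fin t : h1 t \is a fin_num.
Proof. by rewrite /h1; case: ifPn => // t0; rewrite fin_numB g1_fin Pg1_fin. Qed.

Lemma h1_le_g1 t : h1 t <= g1 t.
Proof.
rewrite /h1; case: ifPn => [t0|_]; last exact: g1_ge0.
rewrite {2}(g1_dec _ t0) /h1 t0 -{1}(add0e (_ - _)); apply: leeD => //.
apply: P_ge0; exact: g1_ge0.
Qed.

Lemma shift_good h e : good h -> good (fun u => h (u + e)%R).
Proof.
move=> [mh h0]; split => // ; apply: measurableT_comp => //.
by apply: measurable_realfun.measurable_funD => //; exact: measurable_cst.
Qed.

Lemma P_shift h e s : P (fun u => h (u + e)%R) s = P h (s + e)%R.
Proof. by apply: eq_integral => z _; rewrite addrAC. Qed.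

Lemma h1_dec t t' : (0 < t)%R -> (t < t')%R -> h1 t' < h1 t.
Proof.
move=> t0 tt'; have t'0 : (0 < t')%R by apply: lt_trans t0 tt'.
have e0 : (0 < t' - t)%R by rewrite subr_gt0.
have gt1 := g1_good.
have H : P (fun u => g1 u + g1 t') t < P (fun u => g1 (u + (t' - t))%R + g1 t) t.
  apply: P_lt.
  - by apply: good_add; [exact: shift_good|exact/cst_good/g1_ge0].
  - by apply: good_add => //; exact/cst_good/g1_ge0.
  - move=> u tu; have u0 : (0 < u)%R by apply: lt_le_trans t0 tu.
    rewrite (g1E _ u0) (g1E _ t'0) (g1E _ (addr_gt0 u0 e0)) (g1E _ t0).
    have := convx t0 tu e0; rewrite addrCA subrr addr0 -lee_fin => H; exact: H.
  - move=> v v0; have tv0 : (0 < t + v)%R by rewrite addr_gt0.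
    rewrite (g1E _ tv0) (g1E _ t'0) (g1E _ (addr_gt0 tv0 e0)) (g1E _ t0).
    have := @convx' _ _ (t + v)%R _ t0 _ e0.
    rewrite (addrCA t t') subrr addr0 ltrDl -lte_fin => H; exact: (H v0).
  - by move=> u _; rewrite fin_numD !g1_fin.
  - rewrite (P_add _ _ _ (shift_good _ _ gt1) (cst_good _ (g1_ge0 t))).
    by rewrite P_shift (P_cst _ _ (g1_ge0 t)) fin_numD g1_fin addrCA subrr addr0 Pg1_fin.
move: H.
rewrite (P_add _ _ _ (shift_good _ _ gt1) (cst_good _ (g1_ge0 t))).
rewrite (P_add _ _ _ gt1 (cst_good _ (g1_ge0 t'))).
rewrite P_shift (addrCA t t') subrr addr0 (P_cst _ _ (g1_ge0 t)) (P_cst _ _ (g1_ge0 t')) => H.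
rewrite /h1 t0 t'0; apply: fin_ineq => //; rewrite ?g1_fin ?Pg1_fin //.
Qed.
Lemma h1_le t t' : (0 < t)%R -> (t <= t')%R -> h1 t' <= h1 t.
Proof.
move=> t0; rewrite le_eqVlt => /orP[/eqP->//|tt'].
exact/ltW/h1_dec.
Qed.

Lemma h1_bnd s t : (0 < s)%R -> (s <= t)%R -> h1 t <= (s^-1)%:E.
Proof.
move=> s0 st; apply: (le_trans (h1_le_g1 t)).
by rewrite -g1E //; exact: g1_le.
Qed.

Lemma Ph1_fin s : (0 < s)%R -> P h1 s \is a fin_num.
Proof.
move=> s0; apply: (@fin_of_bnd _ s^-1).
  by apply: P_ge0; exact: h1_good.2.
apply: P_le; first exact: h1_good.
- by move=> t st; exact: h1_bnd.
- by rewrite invr_ge0 ltW.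
Qed.

Lemma Ph1_lt s : (0 < s)%R -> P h1 s < h1 s.
Proof.
move=> s0; suff : P h1 s < P (fun _ => h1 s) s by rewrite P_cst //; exact: h1_good.2.
apply: P_lt.
- exact/cst_good/h1_good.2.
- exact: h1_good.
- by move=> t st; exact: h1_le.
- by move=> u u0; apply: h1_dec => //; rewrite ltrDl.
- by move=> t _; exact: h1_fin.
- by rewrite P_cst ?h1_fin //; exact: h1_good.2.
Qed.

Definition h2 (t : R) : \bar R := if (0 < t)%R then h1 t - P h1 t else 0.

Lemma h2_good : good h2.
Proof.
split.
  apply: measurable_fun_ifT.
  - by apply: measurable_realfun.measurable_fun_ltr => //; exact: measurable_cst.
  - apply: emeasurable_funB; first exact: h1_good.1.
    by apply: P_meas; [exact: h1_good.1|exact: h1_good.2].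
  - exact: measurable_cst.
move=> t; rewrite /h2; case: ifPn => // t0.
rewrite sube_ge0 ?h1_fin ?orbT //; exact: (ltW (Ph1_lt _ t0)).
Qed.

Lemma h2_pos t : (0 < t)%R -> 0 < h2 t.
Proof. by move=> t0; rewrite /h2 t0 sube_gt0 Ph1_lt. Qed.

Lemma h1_dec2 t : (0 < t)%R -> h1 t = P h1 t + h2 t.
Proof. by move=> t0; rewrite /h2 t0 addeC subeK // Ph1_fin. Qed.

Lemma Pg1_good : good (P g1).
Proof. exact: P_good g1_good. Qed.

Lemma dec1 k t : (0 < t)%R -> It k g1 t = It k (P g1) t + It k h1 t.
Proof.
move=> t0; rewrite -It_add; [|exact: Pg1_good|exact: h1_good].
apply: It_local => u tu; apply: g1_dec; exact: lt_le_trans tu.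
Qed.

Lemma dec2 k t : (0 < t)%R -> It k (P g1) t = It k (P (P g1)) t + It k (P h1) t.
Proof.
move=> t0; rewrite -It_add; [|exact: P_good Pg1_good|exact: P_good h1_good].
apply: It_local => u tu; rewrite -P_add; [|exact: Pg1_good|exact: h1_good].
apply: P_local => v uv; apply: g1_dec.
by apply: lt_le_trans uv; exact: lt_le_trans tu.
Qed.

Lemma dec3 k t : (0 < t)%R -> It k h1 t = It k (P h1) t + It k h2 t.
Proof.
move=> t0; rewrite -It_add; [|exact: P_good h1_good|exact: h2_good].
apply: It_local => u tu; apply: h1_dec2; exact: lt_le_trans tu.
Qed.

Lemma FA_bnd k t : (0 < t)%R -> It k g1 t <= (t^-1)%:E.
Proof.
move=> t0; apply: It_le; first exact: g1_good.
- by move=> u tu; rewrite -g1E //; exact: g1_le.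
- by rewrite invr_ge0 ltW.
Qed.

Lemma H1_pos k t : (0 < t)%R -> 0 < It k h1 t.
Proof. by move=> t0; apply: It_gt0 => //; [exact: h1_good|exact: h1_pos]. Qed.

Lemma H2_pos k t : (0 < t)%R -> 0 < It k h2 t.
Proof. by move=> t0; apply: It_gt0 => //; [exact: h2_good|exact: h2_pos]. Qed.
Lemma mS : measurable (supp pi).
Proof.
have := pi_meas measurableT _ (measurable_itv `]0%R, +oo[).
rewrite setTI; congr measurable.
by apply/seteqP; split => z /=; rewrite /supp in_itv /= andbT.
Qed.

Definition I (f : R -> \bar R) := \int[mu]_(z in supp pi) ((pi z)%:E * ((w z)%:E * f (w z))).

Lemma I_meas f : good f -> measurable_fun (supp pi) (fun z => (pi z)%:E * ((w z)%:E * f (w z))).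
Proof.
move=> [mf f0]; apply: (measurable_funS measurableT) => //.
apply: emeasurable_funM; first exact/measurable_EFinP.
apply: emeasurable_funM; first exact/measurable_EFinP/w_meas.
exact: measurableT_comp mf w_meas.
Qed.

Lemma I_ge0 f : good f -> forall z, 0 <= (pi z)%:E * ((w z)%:E * f (w z)).
Proof. by move=> [_ f0] z; rewrite !mule_ge0 // lee_fin // w_ge0. Qed.

Lemma I_add f1 f2 : good f1 -> good f2 -> I (fun t => f1 t + f2 t) = I f1 + I f2.
Proof.
move=> g1' g2'; rewrite /I -ge0_integralD //; last first.
all: try first [exact: mS | exact: I_meas | (by move=> z _; exact: I_ge0)].
apply: eq_integral => z _.
by rewrite ge0_muleDr ?ge0_muleDr ?g1'.2 ?g2'.2 // ?mule_ge0 ?lee_fin ?w_ge0 // ?g1'.2 ?g2'.2.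
Qed.

Lemma I_local f1 f2 : (forall t, (0 < t)%R -> f1 t = f2 t) -> I f1 = I f2.
Proof.
move=> H; apply: eq_integral => z /[!inE] zS.
by rewrite H //; exact: w_gt0.
Qed.

Lemma I_fin f : good f -> (forall t, (0 < t)%R -> f t <= (t^-1)%:E) -> I f \is a fin_num.
Proof.
move=> gf fb; rewrite ge0_fin_numE; last by apply: integral_ge0 => z _; exact: I_ge0.
apply: (@le_lt_trans _ _ (\int[mu]_(z in supp pi) (pi z)%:E)).
  apply: ge0_le_integral => //.
  - exact: mS.
  - by move=> z _; exact: I_ge0.
  - exact: I_meas.
  - by apply: (measurable_funS measurableT) => //; exact/measurable_EFinP.
  move=> z zS; have w0 : (0 < w z)%R by exact: w_gt0.
  rewrite -[X in _ <= X]mule1 lee_wpmul2l ?lee_fin //.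
  apply: (le_trans (lee_wpmul2l _ (fb _ w0))); first by rewrite lee_fin w_ge0.
  by rewrite -EFinM divff // gt_eqF.
apply: (@le_lt_trans _ _ (\int[mu]_z (pi z)%:E)); last by rewrite pi_int1 ltry.
apply: ge0_subset_integral => //.
- exact: mS.
- exact/measurable_EFinP.
- by move=> z _; rewrite lee_fin.
Qed.

Lemma I_pos f : good f -> (forall t, (0 < t)%R -> 0 < f t) -> 0 < I f.
Proof.
move=> gf fp; apply: SP.
- exact: mS.
- exact: I_meas.
- by move=> z _; exact: I_ge0.
- move=> z pz; split => //; rewrite !mule_gt0 ?lte_fin ?w_gt0 //.
  by apply: fp; exact: w_gt0.
Qed.
Lemma good_fin_bnd f t : good f -> (0 < t)%R -> f t <= (t^-1)%:E -> f t \is a fin_num.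
Proof. by move=> [_ f0] t0 ft; exact: (@fin_of_bnd _ _ (f0 t) ft). Qed.

Lemma main_in N (N_ge1 : (1 <= N)%N) x (x_S : supp pi x) :
  (0 < eps mu pi q N - eps mu pi q N.+1)%E /\
  (0 < eps mu pi q N - 2%:E * eps mu pi q N.+1 + eps mu pi q N.+2)%E /\
  (0 < eps_pt mu pi q N x - eps_pt mu pi q N.+1 x)%E /\
  (0 < eps_pt mu pi q N x - 2%:E * eps_pt mu pi q N.+1 x + eps_pt mu pi q N.+2 x)%E.
Proof.
case: N N_ge1 => // k _.
have gA : good (It k g1) := It_good k _ g1_good.
have gB : good (It k (P g1)) := It_good k _ Pg1_good.
have gC : good (It k (P (P g1))) := It_good k _ (P_good _ Pg1_good).
have gH1 : good (It k h1) := It_good k _ h1_good.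
have gPH : good (It k (P h1)) := It_good k _ (P_good _ h1_good).
have gH2 : good (It k h2) := It_good k _ h2_good.
have ept z : (0 < pi z)%R ->
  [/\ eps_pt mu pi q k.+1 z = (w z)%:E * It k g1 (w z),
      eps_pt mu pi q k.+2 z = (w z)%:E * It k (P g1) (w z) &
      eps_pt mu pi q k.+3 z = (w z)%:E * It k (P (P g1)) (w z)].
  move=> pz; have a0 : (0 < w z)%R by exact: w_gt0.
  have loc j : iter_q mu pi q j (fun s => (w z / s)%:E) (w z) = (w z)%:E * It j g1 (w z).
    rewrite -It_scale; [|exact: ltW|exact: g1_good].
    apply: It_local => t at'; rewrite g1E; last exact: lt_le_trans at'.
    by rewrite -EFinM.
  rewrite /eps_pt !succnK !loc; split => //.
    by rewrite It_S.
  by rewrite It_S It_S.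
have dA t : (0 < t)%R -> It k g1 t = It k (P g1) t + It k h1 t := dec1 k t.
have dB t : (0 < t)%R -> It k (P g1) t = It k (P (P g1)) t + It k (P h1) t := dec2 k t.
have dH t : (0 < t)%R -> It k h1 t = It k (P h1) t + It k h2 t := dec3 k t.
have e1 : eps mu pi q k.+1 = I (It k g1).
  by apply: eq_integral => z /[!inE] zS; have [-> _ _] := ept z zS.
have e2 : eps mu pi q k.+2 = I (It k (P g1)).
  by apply: eq_integral => z /[!inE] zS; have [_ -> _] := ept z zS.
have e3 : eps mu pi q k.+3 = I (It k (P (P g1))).
  by apply: eq_integral => z /[!inE] zS; have [_ _ ->] := ept z zS.
rewrite e1 e2 e3.
have pa : (0 < w x)%R by exact: w_gt0.
have [-> -> ->] := ept x x_S.
have [i1 i2] := @final R (I (It k g1)) (I (It k (P g1))) (I (It k (P (P g1))))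
    (I (It k h1)) (I (It k (P h1))) (I (It k h2))
  ltac:(by apply: I_fin => // t t0; exact: FA_bnd)
  ltac:(by apply: integral_ge0 => z _; exact: I_ge0)
  ltac:(by apply: integral_ge0 => z _; exact: I_ge0)
  ltac:(by apply: integral_ge0 => z _; exact: I_ge0)
  ltac:(by rewrite -I_add //; exact: I_local)
  ltac:(by rewrite -I_add //; exact: I_local)
  ltac:(by rewrite -I_add //; exact: I_local)
  ltac:(by apply: I_pos => // t t0; exact: H1_pos)
  ltac:(by apply: I_pos => // t t0; exact: H2_pos).
set a := w x.
have [j1 j2] := @final R ((a)%:E * It k g1 a) (a%:E * It k (P g1) a) (a%:E * It k (P (P g1)) a)
    (a%:E * It k h1 a) (a%:E * It k (P h1) a) (a%:E * It k h2 a)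
  ltac:(by rewrite fin_numM //; apply: good_fin_bnd => //; exact: FA_bnd)
  ltac:(by apply: mule_ge0; [rewrite lee_fin; exact: ltW|exact: gC.2])
  ltac:(by apply: mule_ge0; [rewrite lee_fin; exact: ltW|exact: gPH.2])
  ltac:(by apply: mule_ge0; [rewrite lee_fin; exact: ltW|exact: gH2.2])
  ltac:(by rewrite dA // ge0_muleDr //; [exact: gB.2|exact: gH1.2])
  ltac:(by rewrite dB // ge0_muleDr //; [exact: gC.2|exact: gPH.2])
  ltac:(by rewrite dH // ge0_muleDr //; [exact: gPH.2|exact: gH2.2])
  ltac:(by rewrite mule_gt0 ?lte_fin //; exact: H1_pos)
  ltac:(by rewrite mule_gt0 ?lte_fin //; exact: H2_pos).
by [].
Qed.
End Aux.

Theorem lemma6p9 (d : measure_display) (X : measurableType d) (R : realType)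
  (mu : {measure set X -> \bar R}) (pi q : X -> R)
  (mu_sf : sigma_finite setT mu)
  (pi_meas : measurable_fun setT pi) (q_meas : measurable_fun setT q)
  (pi_ge0 : forall x, 0 <= pi x) (q_ge0 : forall x, 0 <= q x)
  (pi_int1 : (\int[mu]_x (pi x)%:E = 1)%E)
  (q_int1 : (\int[mu]_x (q x)%:E = 1)%E)
  (q_pos : forall x, 0 < pi x -> 0 < q x)
  (N : nat) (N_ge1 : (1 <= N)%N) (x : X) (x_S : supp pi x) :
  (0 < eps mu pi q N - eps mu pi q N.+1)%E /\
  (0 < eps mu pi q N - 2%:E * eps mu pi q N.+1 + eps mu pi q N.+2)%E /\
  (0 < eps_pt mu pi q N x - eps_pt mu pi q N.+1 x)%E /\
  (0 < eps_pt mu pi q N x - 2%:E * eps_pt mu pi q N.+1 x + eps_pt mu pi q N.+2 x)%E.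
Proof. by apply: main_in. Qed.
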